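(* Let $\mathbf{k}$ be a field of characteristic $0$, $n\ge3$, $m\in\mathbf{k}\setminus\mathcal{S}_n$, and let $\rho$ be an irreducible representation of $Br_n(m)$, indexed by the partition $\lambda$. Then either the spectrum of $\rho(t_{12})$ is contained in $\{-1,1\}$, or $|\lambda|<n$ and the spectrum of $\rho(t_{12})$ equals $\{-1,1,1-m\}$.
   Context: $Br_n(m)$ is the Brauer algebra over $\mathbf{k}$ with basis the Brauer diagrams on $n$ top and $n$ bottom points, product by stacking (second factor below) with closed loops replaced by $m$; $s_{12}$ is the transposition diagram, $p_{12}$ the diagram joining top $1$ to top $2$ and bottom $1$ to bottom $2$ with other strands vertical, $t_{12}=s_{12}-p_{12}$. For a partition $\mu$ with $|\mu|\le n$, $n-|\mu|$ even, $P_\mu\in\mathbb{Q}[m]$ is the polynomial equal, at every sufficiently large integer $m$, to the dimension of the irreducible $O(m)$-module indexed by $\mu$; $\mathcal{S}_n=\{m\mid\exists\mu,\ |\mu|\le n,\ P_\mu(m)=0\}\subset\mathbb{Z}$. For $m\notin\mathcal{S}_n$, $Br_n(m)$ is split semisimple with irreducible representations indexed (Wenzl's parametrization) by partitions $\mu$ with $|\mu|\le n$, $n-|\mu|$ even; those with $|\mu|=n$ are those factoring through $\mathbf{k}\mathfrak{S}_n=Br_n(m)/(p_{12})$, and restriction from $Br_n(m)$ to $Br_{n-1}(m)$ follows the rule $\mathrm{Res}\,\rho_\lambda=\sum_{\mu\nearrow\lambda}\rho_\mu+\sum_{\lambda\nearrow\mu}\rho_\mu$, where $\mu\nearrow\lambda$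 means $\lambda$ is obtained from $\mu$ by adding one box. *)

(* Defs.v *)
From HB Require Import structures.
From mathcomp Require Import all_boot all_order all_algebra.
Set Implicit Arguments. Unset Strict Implicit. Unset Printing Implicit Defensive.
Import Order.TTheory GRing.Theory Num.Theory.
Local Open Scope ring_scope.

(* Brauer diagrams.  The 2n points of a diagram on n top and n bottom  *)
(* points: [inl i] = top point i, [inr i] = bottom point i (0-indexed, *)
(* so "points 1,2" of the paper are the ordinals 0,1).  A diagram is a *)
(* fixed-point-free involution of the points (a perfect matching).     *)
Definition bpt (n : nat) := ('I_n + 'I_n)%type.
Definition bfun (n : nat) := {ffun bpt n -> bpt n}.

Definition is_brauer n (D : bfun n) : bool :=
  [forall x, (D x != x) && (D (D x) == x)].

(* Stacking D1 (top) over D2 (bottom): vertex set = top row of D1,     *)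
(* middle row (bottom of D1 = top of D2), bottom row of D2.             *)
Definition bvtx (n : nat) := ('I_n + 'I_n + 'I_n)%type.
Definition up n (x : bpt n) : bvtx n :=
  match x with inl i => inl (inl i) | inr i => inl (inr i) end.
Definition down n (x : bpt n) : bvtx n :=
  match x with inl i => inl (inr i) | inr i => inr i end.
(* outer points of the stacked picture = points of the product diagram *)
Definition outer_of n (x : bpt n) : bvtx n :=
  match x with inl i => inl (inl i) | inr i => inr i end.
Definition is_outer n (v : bvtx n) : bool :=
  match v with inl (inr _) => false | _ => true end.

Definition stack_rel n (D1 D2 : bfun n) : rel (bvtx n) := fun u v =>
  [exists x, (u == up x) && (v == up (D1 x))] ||
  [exists x, (u == down x) && (v == down (D2 x))].

Definition bcomp n (D1 D2 : bfun n) : bfun n :=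
  [ffun x => odflt x [pick y | (y != x) &&
      connect (stack_rel D1 D2) (outer_of x) (outer_of y)]].

(* number of closed loops created by the stacking *)
Definition bloops n (D1 D2 : bfun n) : nat :=
  n_comp (stack_rel D1 D2)
    [pred v | ~~ is_outer v &&
       [forall y : bpt n, ~~ connect (stack_rel D1 D2) v (outer_of y)]].

Definition bid n : bfun n :=
  [ffun x => match x with inl i => inr i | inr i => inl i end].

Definition sw01 n (i : 'I_n) : 'I_n :=
  if (val i < 2)%N then odflt i [pick j : 'I_n | val j == (1 - val i)%N] else i.

Definition s12 n : bfun n :=
  [ffun x => match x with inl i => inr (sw01 i) | inr i => inl (sw01 i) end].

Definition p12 n : bfun n :=
  [ffun x => match x with
     | inl i => if (val i < 2)%N then inl (sw01 i) else inr i
     | inr i => if (val i < 2)%N then inr (sw01 i) else inl i end].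

(* Finite-dimensional representations of Br_n(m) on k^d (column        *)
(* vectors), given by their values on the diagram basis; the algebra   *)
(* map is the linear extension.                                        *)
Definition is_brauer_rep (k : fieldType) n (m : k) d
    (rho : bfun n -> 'M[k]_d) : Prop :=
  rho (bid n) = 1%:M /\
  forall D1 D2, is_brauer D1 -> is_brauer D2 ->
    rho D1 *m rho D2 = (m ^+ bloops D1 D2) *: rho (bcomp D1 D2).

(* irreducible: nonzero, and the only invariant subspaces of k^d are 0 *)
(* and k^d.  A subspace W of column vectors k^d is encoded as the row  *)
(* space of U (rows of U = vectors of W, transposed); invariance of W  *)
(* under v |-> rho(D) v reads  U *m (rho D)^T <= U.  W = 0 iff U = 0.   *)
Definition irreducible_brauer_rep (k : fieldType) n d
    (rho : bfun n -> 'M[k]_d) : Prop :=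
  (0 < d)%N /\
  forall U : 'M[k]_d,
    (forall D, is_brauer D -> (U *m (rho D)^T <= U)%MS) ->
    U = 0 \/ (U == (1%:M : 'M[k]_d))%MS.

(* rho factors through k S_n = Br_n(m)/(p_12): it kills the ideal      *)
(* (p_12), spanned by the diagrams having a horizontal (top-top) edge. *)
Definition factors_through_Sn (k : fieldType) n d
    (rho : bfun n -> 'M[k]_d) : Prop :=
  forall D, is_brauer D ->
    [exists i : 'I_n, if D (inl i) is inl _ then true else false] ->
    rho D = 0.

Definition rho_t12 (k : fieldType) n d (rho : bfun n -> 'M[k]_d) : 'M[k]_d :=
  rho (s12 n) - rho (p12 n).

Definition is_partition (s : seq nat) : bool :=
  sorted geq s && all (fun x => 0 < x)%N s.

(* 1-indexed row length lambda_i and column length lambda'_j *)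
Definition prow (s : seq nat) (i : nat) : int := (nth 0 s i.-1)%N%:Z.
Definition pcol (s : seq nat) (j : nat) : int := (count (fun x => j <= x)%N s)%:Z.

(* hook length of box (i,j) (1-indexed) *)
Definition phook (s : seq nat) (i j : nat) : int :=
  prow s i - j%:Z + pcol s j - i%:Z + 1.

(* content-type shift of the El Samra--King formula *)
Definition pshift (s : seq nat) (i j : nat) : int :=
  if (i <= j)%N then prow s i + prow s j - i%:Z - j%:Z
  else - pcol s i - pcol s j + i%:Z + j%:Z - 2.

(* P_mu: El Samra--King product formula for dim of the O(m)-irrep mu *)
Definition Pmu (s : seq nat) : {poly rat} :=
  \prod_(i < size s) \prod_(j < nth 0%N s i)
     (('X + ((pshift s i.+1 j.+1)%:~R : rat)%:P) *
        (((phook s i.+1 j.+1)%:~R : rat)^-1)%:P).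

Definition in_Sn (n : nat) (z : int) : Prop :=
  exists mu : seq nat,
    [/\ is_partition mu, (sumn mu <= n)%N, ~~ odd (n - sumn mu)
      & (Pmu mu).[z%:~R] = 0].

(* Main.v *)
Require Import Defs.
From HB Require Import structures.
From mathcomp Require Import all_boot all_order all_algebra zify ring.
Import Order.TTheory GRing.Theory Num.Theory.
Set Implicit Arguments. Unset Strict Implicit. Unset Printing Implicit Defensive.

Definition mkpt k (p : bool * nat) : bpt k.+3 :=
  if p.1 then inl (inord p.2) else inr (inord p.2).
Definition topt k (x : bpt k.+3) : bool * nat :=
  match x with inl i => (true, val i) | inr i => (false, val i) end.

Lemma mkptK k (x : bpt k.+3) : mkpt k (topt x) = x.
Proof. by case: x => i /=; rewrite /mkpt /= inord_val. Qed.

Lemma toptK k p : (p.2 < k.+3)%N -> topt (mkpt k p) = p.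
Proof. by case: p => [[] j] h; rewrite /mkpt /= inordK. Qed.

Lemma topt_lt k (x : bpt k.+3) : ((topt x).2 < k.+3)%N.
Proof. by case: x => i /=. Qed.

Definition okg k (g : bool * nat -> bool * nat) :=
  forall p, (p.2 < k.+3)%N -> ((g p).2 < k.+3)%N.

Definition mkD k (g : bool * nat -> bool * nat) : bfun k.+3 :=
  [ffun x => mkpt k (g (topt x))].

Lemma mkDE k g p : (p.2 < k.+3)%N -> mkD k g (mkpt k p) = mkpt k (g p).
Proof. by move=> h; rewrite ffunE toptK. Qed.

Lemma topt_mkD k g (x : bpt k.+3) : okg k g -> topt (mkD k g x) = g (topt x).
Proof. by move=> ok; rewrite ffunE toptK //; apply: ok; apply: topt_lt. Qed.

Definition vl k (v : bvtx k.+3) : nat * nat :=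
  match v with inl (inl i) => (0, val i) | inl (inr i) => (1, val i) | inr i => (2, val i) end.
Definition lU (b : bool) : nat := if b then 0 else 1.
Definition lD (b : bool) : nat := if b then 1 else 2.
Definition lO (b : bool) : nat := if b then 0 else 2.

Lemma vl_up k (x : bpt k.+3) : vl (up x) = (lU (topt x).1, (topt x).2).
Proof. by case: x. Qed.
Lemma vl_down k (x : bpt k.+3) : vl (down x) = (lD (topt x).1, (topt x).2).
Proof. by case: x. Qed.
Lemma vl_outer k (x : bpt k.+3) : vl (outer_of x) = (lO (topt x).1, (topt x).2).
Proof. by case: x. Qed.

Lemma label_connect k (D1 D2 : bfun k.+3) (c : bvtx k.+3 -> nat) :
  (forall x, c (up x) = c (up (D1 x))) -> (forall x, c (down x) = c (down (D2 x))) ->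
  forall u v, connect (stack_rel D1 D2) u v -> c u = c v.
Proof.
move=> h1 h2 u v /connectP [p pth ->]; elim: p u pth => //= w p IH u /andP [e pth].
rewrite -(IH _ pth); case/orP: e => /existsP [x /andP [/eqP -> /eqP ->]]; by [].
Qed.

Fixpoint follow (g1 g2 : bool * nat -> bool * nat) (fuel : nat) (d : bool)
    (p : bool * nat) : option (bool * nat) :=
  match fuel with 0 => None | f.+1 =>
  if d then let q := g1 p in if q.1 then Some (true, q.2) else follow g1 g2 f false (true, q.2)
  else let q := g2 p in if q.1 then follow g1 g2 f true (false, q.2) else Some (false, q.2)
  end.

Definition vtx k (d : bool) (p : bool * nat) : bvtx k.+3 :=
  if d then up (mkpt k p) else down (mkpt k p).

Lemma follow_connect k g1 g2 : okg k g1 -> okg k g2 ->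
  forall fuel d p r, (p.2 < k.+3)%N -> follow g1 g2 fuel d p = Some r ->
  connect (stack_rel (mkD k g1) (mkD k g2)) (vtx k d p) (outer_of (mkpt k r)).
Proof.
move=> ok1 ok2; elim=> // f IH [] p r hp /=.
  have e : stack_rel (mkD k g1) (mkD k g2) (vtx k true p) (up (mkpt k (g1 p))).
    by apply/orP; left; apply/existsP; exists (mkpt k p); rewrite mkDE // !eqxx.
  move: (ok1 _ hp) e; case: (g1 p) => [[] j] /= hj e.
    by case=> <-; apply: connect1; rewrite /mkpt /= in e *.
  by move=> /(IH false (true, j) r hj) /(connect_trans (connect1 e)).
have e : stack_rel (mkD k g1) (mkD k g2) (vtx k false p) (down (mkpt k (g2 p))).
  by apply/orP; right; apply/existsP; exists (mkpt k p); rewrite mkDE // !eqxx.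
move: (ok2 _ hp) e; case: (g2 p) => [[] j] /= hj e.
  by move=> /(IH true (false, j) r hj) /(connect_trans (connect1 e)).
by case=> <-; apply: connect1; rewrite /mkpt /= in e *.
Qed.

Lemma vtx_outer k p : vtx k p.1 p = outer_of (mkpt k p).
Proof. by case: p => [[] j]. Qed.

Definition FUEL := 8.

Lemma bcomp_mkD k g1 g2 gE (cl : nat * nat -> nat) :
  okg k g1 -> okg k g2 -> okg k gE ->
  (forall b i, (i < k.+3)%N -> cl (lU b, i) = cl (lU (g1 (b, i)).1, (g1 (b, i)).2)) ->
  (forall b i, (i < k.+3)%N -> cl (lD b, i) = cl (lD (g2 (b, i)).1, (g2 (b, i)).2)) ->
  (forall b i, (i < k.+3)%N -> follow g1 g2 FUEL b (b, i) = Some (gE (b, i))) ->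
  (forall b i, (i < k.+3)%N -> gE (b, i) != (b, i)) ->
  (forall b i b' i', (i < k.+3)%N -> (i' < k.+3)%N -> cl (lO b, i) = cl (lO b', i') ->
     (b', i') = (b, i) \/ (b', i') = gE (b, i)) ->
  bcomp (mkD k g1) (mkD k g2) = mkD k gE.
Proof.
move=> ok1 ok2 okE h1 h2 hf hE hu.
have lab := @label_connect k (mkD k g1) (mkD k g2) (fun v => cl (vl v)).
have {lab} lab : forall u v, connect (stack_rel (mkD k g1) (mkD k g2)) u v -> cl (vl u) = cl (vl v).
  apply: lab => x; rewrite ?vl_up ?vl_down topt_mkD //; case: (topt x) (topt_lt x) => b i /= hi.
    by rewrite h1.
  by rewrite h2.
apply/ffunP => x; rewrite /bcomp !ffunE /=.
have hx := topt_lt x.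
have cx : connect (stack_rel (mkD k g1) (mkD k g2)) (outer_of x) (outer_of (mkpt k (gE (topt x)))).
  move: (hf (topt x).1 (topt x).2 hx); rewrite -surjective_pairing => /follow_connect.
  by move=> /(_ k ok1 ok2 hx); rewrite vtx_outer mkptK.
case: pickP => [y /andP [yx cxy] | none] /=.
  have := lab _ _ cxy; rewrite !vl_outer => /(hu _ _ _ _ hx (topt_lt y)).
  rewrite -!surjective_pairing => -[ey | ey].
    by move: yx; rewrite -(mkptK y) -(mkptK x) ey eqxx.
  by rewrite -ey mkptK.
move: (none (mkpt k (gE (topt x)))); rewrite cx andbT => /negbFE /eqP ex.
move: (hE (topt x).1 (topt x).2 hx); rewrite -surjective_pairing.
by rewrite -{1}ex toptK ?eqxx //; apply: okE.
Qed.

Lemma is_brauer_mkD k g : okg k g ->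
  (forall b i, (i < k.+3)%N -> g (b, i) != (b, i) /\ g (g (b, i)) = (b, i)) ->
  is_brauer (mkD k g).
Proof.
move=> ok h; apply/forallP => x; rewrite -(mkptK x); set p := topt x.
have hp : (p.2 < k.+3)%N by apply: topt_lt.
case: (h p.1 p.2 hp); rewrite -surjective_pairing => h1 h2.
rewrite !mkDE //; last by apply: ok.
rewrite h2 eqxx andbT; apply/eqP => /(congr1 (@topt k)); rewrite !toptK //; last by apply: ok.
by apply/eqP.
Qed.

Lemma stack_sym k (D1 D2 : bfun k.+3) : is_brauer D1 -> is_brauer D2 ->
  symmetric (stack_rel D1 D2).
Proof.
move=> /forallP b1 /forallP b2.
have ss : forall u v, stack_rel D1 D2 u v -> stack_rel D1 D2 v u.
  move=> u v /orP [] /existsP [x /andP [/eqP -> /eqP ->]]; apply/orP.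
    left; apply/existsP; exists (D1 x); case/andP: (b1 x) => _ /eqP ->; by rewrite !eqxx.
  right; apply/existsP; exists (D2 x); case/andP: (b2 x) => _ /eqP ->; by rewrite !eqxx.
by move=> u v; apply/idP/idP; apply: ss.
Qed.

Lemma bloops0 k g1 g2 : okg k g1 -> okg k g2 ->
  (forall i, (i < k.+3)%N -> exists r, follow g1 g2 FUEL false (true, i) = Some r) ->
  bloops (mkD k g1) (mkD k g2) = 0%N.
Proof.
move=> ok1 ok2 h; rewrite /bloops /n_comp_mem; apply: eq_card0 => v; rewrite !inE.
apply/negbTE; apply/nandP; right; apply/nandP.
case: v => [[i|i]|i] /=; try by left.
right; have [r hr] := h _ (ltn_ord i).
have := @follow_connect k g1 g2 ok1 ok2 FUEL false (true, val i) r (ltn_ord i) hr.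
rewrite /vtx /mkpt /= inord_val => c.
by apply/negP => /forallP /(_ (mkpt k r)); rewrite c.
Qed.

Lemma bloops1 k g1 g2 (cl : nat * nat -> nat) a L :
  okg k g1 -> okg k g2 -> is_brauer (mkD k g1) -> is_brauer (mkD k g2) ->
  (forall b i, (i < k.+3)%N -> cl (lU b, i) = cl (lU (g1 (b, i)).1, (g1 (b, i)).2)) ->
  (forall b i, (i < k.+3)%N -> cl (lD b, i) = cl (lD (g2 (b, i)).1, (g2 (b, i)).2)) ->
  (a < k.+3)%N -> cl (1%N, a) = L ->
  (forall b i, (i < k.+3)%N -> cl (lO b, i) != L) ->
  (forall i, (i < k.+3)%N -> cl (1%N, i) = L -> i = a \/ g1 (false, a) = (false, i)) ->
  (forall i, (i < k.+3)%N -> cl (1%N, i) != L -> exists r, follow g1 g2 FUEL false (true, i) = Some r) ->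
  bloops (mkD k g1) (mkD k g2) = 1%N.
Proof.
move=> ok1 ok2 b1 b2 h1 h2 ha haL hO hM hF.
set R := stack_rel (mkD k g1) (mkD k g2).
have sym : connect_sym R by apply: sym_connect_sym; apply: stack_sym.
have lab : forall u v, connect R u v -> cl (vl u) = cl (vl v).
  apply: (@label_connect k (mkD k g1) (mkD k g2) (fun v => cl (vl v))) => x;
    rewrite ?vl_up ?vl_down topt_mkD //; case: (topt x) (topt_lt x) => b i /= hi.
    by rewrite h1.
  by rewrite h2.
pose Ma : bvtx k.+3 := inl (inr (inord a)).
have hMa : cl (vl Ma) = L by rewrite /= inordK.
rewrite /bloops -(n_comp_connect sym Ma); apply: eq_n_comp_r => v; rewrite !inE.
apply/idP/idP.
  case: v => [[i|i]|i] //= /forallP hv.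
  have hi := ltn_ord i.
  case: (eqVneq (cl (1%N, val i)) L) => hL.
    case: (hM _ hi hL) => [ei | eg].
      by rewrite /Ma -ei inord_val connect0.
    apply: connect1; apply/orP; left; apply/existsP; exists (mkpt k (false, a)).
    rewrite mkDE // eg /mkpt /= inord_val; by rewrite !eqxx.
  have [r hr] := hF _ hi hL.
  have := @follow_connect k g1 g2 ok1 ok2 FUEL false (true, val i) r hi hr.
  by rewrite /vtx /mkpt /= inord_val => c; move: (hv (mkpt k r)); rewrite c.
move=> c; have lv := lab _ _ c; rewrite hMa in lv.
apply/andP; split.
  move: c lv; case: v => [[i|i]|i] //= _ lv.
    by move: (hO true _ (ltn_ord i)); rewrite lv eqxx.
  by move: (hO false _ (ltn_ord i)); rewrite lv eqxx.
apply/forallP => y; apply/negP => cy.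
have := lab _ _ (connect_trans c cy); rewrite hMa vl_outer => e.
by move: (hO (topt y).1 (topt y).2 (topt_lt y)); rewrite -e eqxx.
Qed.

Definition sw (j : nat) : nat := match j with 0 => 1 | 1 => 0 | _ => j end.
Definition gid (p : bool * nat) := (~~ p.1, p.2).
Definition gs (p : bool * nat) := (~~ p.1, sw p.2).
Definition gp (p : bool * nat) := match p.2 with 0 | 1 => (p.1, sw p.2) | _ => (~~ p.1, p.2) end.
Definition gq (p : bool * nat) := match p.2 with 1 => (p.1, 2) | 2 => (p.1, 1) | _ => (~~ p.1, p.2) end.
Definition gA (p : bool * nat) := match p with
  | (true, 0) => (false, 1) | (true, 1) => (true, 2) | (true, 2) => (true, 1)
  | (false, 0) => (false, 2) | (false, 1) => (true, 0) | (false, 2) => (false, 0)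
  | (b, j) => (~~ b, j) end.
Definition gC (p : bool * nat) := match p with
  | (true, 0) => (false, 2) | (true, 1) => (true, 2) | (true, 2) => (true, 1)
  | (false, 0) => (false, 1) | (false, 1) => (false, 0) | (false, 2) => (true, 0)
  | (b, j) => (~~ b, j) end.
Definition gB (p : bool * nat) := match p with
  | (true, 0) => (true, 1) | (true, 1) => (true, 0) | (true, 2) => (false, 0)
  | (false, 0) => (true, 2) | (false, 1) => (false, 2) | (false, 2) => (false, 1)
  | (b, j) => (~~ b, j) end.

Definition mkcl (t : nat -> nat -> nat) (v : nat * nat) : nat :=
  match v.2 with 0 | 1 | 2 => t v.1 v.2 | j => j.+4 end.

Ltac ok_tac := move=> [[] [|[|[|?]]]] /= ? //=.

Lemma ok_gid k : okg k gid. Proof. ok_tac. Qed.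
Lemma ok_gs k : okg k gs. Proof. ok_tac. Qed.
Lemma ok_gp k : okg k gp. Proof. ok_tac. Qed.
Lemma ok_gq k : okg k gq. Proof. ok_tac. Qed.
Lemma ok_gA k : okg k gA. Proof. ok_tac. Qed.
Lemma ok_gB k : okg k gB. Proof. ok_tac. Qed.
Lemma ok_gC k : okg k gC. Proof. ok_tac. Qed.

Ltac br_tac := move=> [] [|[|[|?]]] ? //=.
Lemma br_gs k : is_brauer (mkD k gs). Proof. apply: is_brauer_mkD; [exact: ok_gs | br_tac]. Qed.
Lemma br_gp k : is_brauer (mkD k gp). Proof. apply: is_brauer_mkD; [exact: ok_gp | br_tac]. Qed.
Lemma br_gq k : is_brauer (mkD k gq). Proof. apply: is_brauer_mkD; [exact: ok_gq | br_tac]. Qed.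
Lemma br_gA k : is_brauer (mkD k gA). Proof. apply: is_brauer_mkD; [exact: ok_gA | br_tac]. Qed.
Lemma br_gB k : is_brauer (mkD k gB). Proof. apply: is_brauer_mkD; [exact: ok_gB | br_tac]. Qed.
Lemma br_gC k : is_brauer (mkD k gC). Proof. apply: is_brauer_mkD; [exact: ok_gC | br_tac]. Qed.

Ltac c1 := move=> [] [|[|[|?]]] ? //=.
Ltac cu := move=> [] [|[|[|?]]] [] [|[|[|?]]] ? ?; rewrite /mkcl /=;
  first [ by left | by right | (let H := fresh in move=> H; discriminate H) | (move=> [->]; by [left | right]) ].

Ltac comp_tac ok1 ok2 okE cl :=
  apply: (@bcomp_mkD _ _ _ _ cl); [exact: ok1 | exact: ok2 | exact: okE | c1 | c1 | c1 | c1 | cu].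

Definition t_ss l j := match l with 1 => sw j | _ => j end.
Lemma c_ss k : bcomp (mkD k gs) (mkD k gs) = mkD k gid.
Proof. comp_tac ok_gs ok_gs ok_gid (mkcl t_ss). Qed.

Definition t_sp l j := match l, j with 2, 0 | 2, 1 => 1 | _, 0 | _, 1 => 0 | _, _ => 2 end.
Lemma c_sp k : bcomp (mkD k gs) (mkD k gp) = mkD k gp.
Proof. comp_tac ok_gs ok_gp ok_gp (mkcl t_sp). Qed.

Definition t_ps l j := match l, j with 0, 0 | 0, 1 => 0 | _, 0 | _, 1 => 1 | _, _ => 2 end.
Lemma c_ps k : bcomp (mkD k gp) (mkD k gs) = mkD k gp.
Proof. comp_tac ok_gp ok_gs ok_gp (mkcl t_ps). Qed.

Definition t_pp l j := match l, j with 0, 0 | 0, 1 => 0 | 1, 0 | 1, 1 => 3 | 2, 0 | 2, 1 => 1 | _, _ => 2 end.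
Lemma c_pp k : bcomp (mkD k gp) (mkD k gp) = mkD k gp.
Proof. comp_tac ok_gp ok_gp ok_gp (mkcl t_pp). Qed.

Definition t_qq l j := match l, j with _, 0 => 0 | 0, _ => 1 | 1, _ => 3 | _, _ => 2 end.
Lemma c_qq k : bcomp (mkD k gq) (mkD k gq) = mkD k gq.
Proof. comp_tac ok_gq ok_gq ok_gq (mkcl t_qq). Qed.

Definition t_qs l j := match l, j with 0, 0 => 0 | 0, _ => 1 | 1, 0 => 0 | 1, _ => 2 | _, 1 => 0 | _, _ => 2 end.
Lemma c_qs k : bcomp (mkD k gq) (mkD k gs) = mkD k gA.
Proof. comp_tac ok_gq ok_gs ok_gA (mkcl t_qs). Qed.

Definition t_Aq l j := match l, j with 0, 0 => 0 | 0, _ => 1 | 1, _ => 0 | _, 0 => 0 | _, _ => 2 end.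
Lemma c_Aq k : bcomp (mkD k gA) (mkD k gq) = mkD k gq.
Proof. comp_tac ok_gA ok_gq ok_gq (mkcl t_Aq). Qed.

Definition t_qp l j := match l, j with 0, 0 => 0 | 0, _ => 1 | 1, _ => 0 | _, 2 => 0 | _, _ => 2 end.
Lemma c_qp k : bcomp (mkD k gq) (mkD k gp) = mkD k gC.
Proof. comp_tac ok_gq ok_gp ok_gC (mkcl t_qp). Qed.

Lemma c_Cq k : bcomp (mkD k gC) (mkD k gq) = mkD k gq.
Proof. comp_tac ok_gC ok_gq ok_gq (mkcl t_Aq). Qed.

Definition t_pq l j := match l, j with 0, 2 => 1 | 0, _ => 0 | 1, _ => 1 | _, 0 => 1 | _, _ => 2 end.
Lemma c_pq k : bcomp (mkD k gp) (mkD k gq) = mkD k gB.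
Proof. comp_tac ok_gp ok_gq ok_gB (mkcl t_pq). Qed.

Definition t_Bp l j := match l, j with 0, 2 => 1 | 0, _ => 0 | 1, _ => 1 | _, 2 => 1 | _, _ => 2 end.
Lemma c_Bp k : bcomp (mkD k gB) (mkD k gp) = mkD k gp.
Proof. comp_tac ok_gB ok_gp ok_gp (mkcl t_Bp). Qed.

Ltac l0 ok1 ok2 := apply: bloops0; [exact: ok1 | exact: ok2 | move=> [|[|[|?]]] ? /=; by eexists].
Lemma l_ss k : bloops (mkD k gs) (mkD k gs) = 0%N. Proof. l0 ok_gs ok_gs. Qed.
Lemma l_sp k : bloops (mkD k gs) (mkD k gp) = 0%N. Proof. l0 ok_gs ok_gp. Qed.
Lemma l_ps k : bloops (mkD k gp) (mkD k gs) = 0%N. Proof. l0 ok_gp ok_gs. Qed.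
Lemma l_qs k : bloops (mkD k gq) (mkD k gs) = 0%N. Proof. l0 ok_gq ok_gs. Qed.
Lemma l_Aq k : bloops (mkD k gA) (mkD k gq) = 0%N. Proof. l0 ok_gA ok_gq. Qed.
Lemma l_qp k : bloops (mkD k gq) (mkD k gp) = 0%N. Proof. l0 ok_gq ok_gp. Qed.
Lemma l_Cq k : bloops (mkD k gC) (mkD k gq) = 0%N. Proof. l0 ok_gC ok_gq. Qed.
Lemma l_pq k : bloops (mkD k gp) (mkD k gq) = 0%N. Proof. l0 ok_gp ok_gq. Qed.
Lemma l_Bp k : bloops (mkD k gB) (mkD k gp) = 0%N. Proof. l0 ok_gB ok_gp. Qed.

Ltac l1 ok br cl a :=
  apply: (@bloops1 _ _ _ cl a 3); [exact: ok | exact: ok | exact: br | exact: br | c1 | c1 | by [] | by []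
   | c1 | move=> [|[|[|?]]] ? //=; try by [left | right]
   | move=> [|[|[|?]]] ? //= _; by eexists].
Lemma l_pp k : bloops (mkD k gp) (mkD k gp) = 1%N. Proof. l1 ok_gp br_gp (mkcl t_pp) 0%N. Qed.
Lemma l_qq k : bloops (mkD k gq) (mkD k gq) = 1%N. Proof. l1 ok_gq br_gq (mkcl t_qq) 1%N. Qed.

Lemma val_sw01 k (i : 'I_k.+3) : val (sw01 i) = sw (val i).
Proof.
rewrite /sw01; case: ifP => h; last by case: i h => [[|[|j]] ?].
case: pickP => [j /eqP -> | none]; first by case: i h => [[|[|j']] ?].
have : (1 - val i < k.+3)%N by lia.
move=> hl; move: (none (Ordinal hl)); by rewrite /= eqxx.
Qed.

Lemma sw_lt k j : (j < k.+3)%N -> (sw j < k.+3)%N.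
Proof. by case: j => [|[|j]]. Qed.

Lemma s12E k : s12 k.+3 = mkD k gs.
Proof.
apply/ffunP => x; rewrite !ffunE; case: x => i /=; rewrite /mkpt /=; congr (_ _);
  apply: val_inj; rewrite /= val_sw01 inordK //. all: apply: sw_lt; apply: ltn_ord.
Qed.

Lemma p12E k : p12 k.+3 = mkD k gp.
Proof.
apply/ffunP => x; rewrite !ffunE; case: x => i /=; rewrite /mkpt /=;
  case: i => [[|[|[|j]]] hj] /=; congr (_ _); apply: val_inj; rewrite /= ?val_sw01 inordK //.
Qed.

Lemma bidE k : bid k.+3 = mkD k gid.
Proof.
apply/ffunP => x; rewrite !ffunE; case: x => i /=; rewrite /mkpt /=; congr (_ _);
  apply: val_inj; by rewrite /= inordK.
Qed.

Local Open Scope ring_scope.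

Lemma Pmu_zero (s : seq nat) (z : int) (i0 j0 : nat) :
  (i0 < size s)%N -> (j0 < nth 0%N s i0)%N ->
  (z%:~R : rat) + (pshift s i0.+1 j0.+1)%:~R = 0 -> (Pmu s).[z%:~R] = 0.
Proof.
move=> hi hj h; rewrite /Pmu horner_prod; apply/eqP; rewrite prodf_seq_eq0.
apply/hasP; exists (Ordinal hi); first by rewrite mem_index_enum.
rewrite /= horner_prod prodf_seq_eq0; apply/hasP; exists (Ordinal hj); first by rewrite mem_index_enum.
by rewrite /= hornerM hornerD hornerX hornerC h mul0r.
Qed.

Lemma inSn_of n (mu : seq nat) z : is_partition mu -> (sumn mu <= n)%N ->
  odd n = odd (sumn mu) -> (Pmu mu).[z%:~R] = 0 -> in_Sn n z.
Proof.
move=> h1 h2 h3 h4; exists mu; split => //.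
by rewrite oddB // h3 addbb.
Qed.

Lemma S1 n : (3 <= n)%N -> in_Sn n 1.
Proof.
move=> hn; case: (boolP (odd n)) => ho.
  apply: (@inSn_of _ [:: 1; 1; 1]%N) => //; try (by rewrite /=; lia); try (by rewrite /= (negbTE ho)).
  by apply: (@Pmu_zero _ _ 2 0); rewrite /pshift /prow /pcol /=.
apply: (@inSn_of _ [:: 1; 1]%N) => //; try (by rewrite /=; lia); try (by rewrite /= (negbTE ho)).
by apply: (@Pmu_zero _ _ 1 0); rewrite /pshift /prow /pcol /=.
Qed.

Lemma S2 n : (3 <= n)%N -> in_Sn n (-2).
Proof.
move=> hn; case: (boolP (odd n)) => ho.
  apply: (@inSn_of _ [:: 2; 1]%N) => //; try (by rewrite /=; lia); try (by rewrite /= (negbTE ho)).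
  by apply: (@Pmu_zero _ _ 0 0); rewrite /pshift /prow /pcol /=.
apply: (@inSn_of _ [:: 2]%N) => //; try (by rewrite /=; lia); try (by rewrite /= (negbTE ho)).
by apply: (@Pmu_zero _ _ 0 0); rewrite /pshift /prow /pcol /=.
Qed.

Lemma sc (k : fieldType) d (a : k) (X : 'M[k]_d) : a%:M * X = a *: X.
Proof. by rewrite -mulmxE mul_scalar_mx. Qed.
Lemma scr (k : fieldType) d (a : k) (X Y : 'M[k]_d) : X * (a *: Y) = a *: (X * Y).
Proof. by rewrite -!mulmxE scalemxAr. Qed.
Lemma scl (k : fieldType) d (a : k) (X Y : 'M[k]_d) : (a *: X) * Y = a *: (X * Y).
Proof. by rewrite -!mulmxE scalemxAl. Qed.

Lemma key (k : fieldType) (m : k) d (S P Q A B C : 'M[k]_d) :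
  m != 1 -> m != -2 ->
  S * S = 1 -> S * P = P -> P * S = P -> P * P = m *: P ->
  Q * Q = m *: Q -> Q * S = A -> A * Q = Q -> Q * P = C -> C * Q = Q ->
  P * Q = B -> B * P = P -> P != 0 ->
  forall a, eigenvalue (S - P) a <-> (a = -1 \/ a = 1 \/ a = 1 - m).
Proof.
move=> m1 m2 SS SP PS PP QQ QS AQ QP CQ PQ BP P0.
set t := S - P.
have QSQ : Q * S * Q = Q by rewrite QS AQ.
have QPQ : Q * P * Q = Q by rewrite QP CQ.
have PQP : P * Q * P = P by rewrite PQ BP.
have tS : t * S = 1 - P by rewrite /t mulrBl SS PS.
have tP : t * P = (1 - m) *: P by rewrite /t mulrBl SP PP scalerBl scale1r.
have Q0 : Q = 0 -> False.
  by move=> Q0; move: PQP; rewrite Q0 mulr0 mul0r => /esym /eqP; rewrite (negbTE P0).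
have unit_ker : forall a (X : 'M[k]_d), (t - a%:M) * X = 0 -> ~~ eigenvalue t a -> X = 0.
  move=> a X hX; rewrite /eigenvalue /eigenspace negbK kermx_eq0 row_free_unit => u.
  by rewrite -[X](mulKmx u) mulmxE hX mulr0.
move=> a; split.
  case/eigenvalueP => v vt v0.
  have w : (a - (1 - m)) *: (v *m P) = 0.
    rewrite scalerBl scalemxAl -vt -mulmxA (tP : t *m P = _) -scalemxAr subrr //.
  move/eqP: w; rewrite scaler_eq0 subr_eq0 => /orP [/eqP -> | /eqP w]; first by right; right.
  have vS : v *m S = a *: v by rewrite -vt /t mulmxBr w subr0.
  have : v = (a * a) *: v.
    have SS' : S *m S = 1%:M := SS.
    by rewrite -{1}(mulmx1 v) -SS' mulmxA vS -scalemxAl vS scalerA.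
  move/eqP; rewrite -subr_eq0 -{1}(scale1r v) -scalerBl scaler_eq0 (negbTE v0) orbF.
  have -> : 1 - a * a = (1 - a) * (1 + a) by ring.
  rewrite mulf_eq0 subr_eq0 addr_eq0 => /orP [/eqP <- | /eqP h]; [by right; left | by left; rewrite h opprK].
case=> [-> | [-> | ->]]; case: (boolP (eigenvalue t _)) => // ne; exfalso.
- have h : (t - (-1)%:M) * (S - 1) = 0.
    rewrite mulrBr mulr1 !mulrBl SS PS sc scaleN1r.
    rewrite (_ : (-1)%:M = - 1); last by rewrite raddfN.
    by rewrite /t opprK !opprD !opprK !addrA addrK subrK subrr.
  have := unit_ker _ _ h ne; move/eqP; rewrite subr_eq0 => /eqP S1.
  move: QSQ; rewrite S1 mulr1 QQ => /eqP; rewrite -subr_eq0 -{2}(scale1r Q) -scalerBl.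
  by rewrite scaler_eq0 subr_eq0 (negbTE m1) /= => /eqP /Q0.
- have h1 : (t - 1%:M) * (S + 1) = - (P + P).
    rewrite mulrDr mulr1 mulrBl tS sc scale1r /t.
    have e1 : (1%:M : 'M[k]_d) = 1 by [].
    by rewrite e1 opprD !addrA subrK [LHS]addrC !addrA addNr add0r.
  have h2 : (t - 1%:M) * P = - (m *: P).
    by rewrite mulrBl tP sc scale1r scalerBl scale1r addrAC subrr add0r.
  have h : (t - 1%:M) * (m *: (S + 1) - 2%:R *: P) = 0.
    by rewrite mulrBr !scr h1 h2 !scalerN opprK scalerA scalerDr -scalerDl mulr_natl mulr2n addNr.
  have := unit_ker _ _ h ne; move/eqP; rewrite subr_eq0 => /eqP E.
  have : Q * (m *: (S + 1)) * Q = Q * (2%:R *: P) * Q by rewrite E.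
  rewrite !scr !scl mulrDr mulrDl QSQ QPQ mulr1 QQ => /eqP.
  rewrite -subr_eq0 scalerDr scalerA -scalerDl -scalerBl scaler_eq0.
  have -> : m + m * m - 2%:R = (m - 1) * (m + 2%:R) by ring.
  rewrite mulf_eq0 subr_eq0 (negbTE m1) /= addr_eq0 (negbTE m2) /=.
  by move/eqP/Q0.
- have h : (t - (1 - m)%:M) * P = 0.
    by rewrite mulrBl tP -mulmxE mul_scalar_mx subrr.
  by move: P0; rewrite (unit_ker _ _ h ne) eqxx.
Qed.

Lemma sq_eig (k : fieldType) d (S : 'M[k]_d) a : S * S = 1 -> eigenvalue S a -> a = 1 \/ a = -1.
Proof.
move=> SS /eigenvalueP [v vS v0].
have : v = (a * a) *: v.
  have SS' : S *m S = 1%:M := SS.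
  by rewrite -{1}(mulmx1 v) -SS' mulmxA vS -scalemxAl vS scalerA.
move/eqP; rewrite -subr_eq0 -{1}(scale1r v) -scalerBl scaler_eq0 (negbTE v0) orbF.
have -> : 1 - a * a = (1 - a) * (1 + a) by ring.
rewrite mulf_eq0 subr_eq0 addr_eq0 => /orP [/eqP <- | /eqP h]; [by left | by right; rewrite h opprK].
Qed.

Unset Implicit Arguments.

Theorem mainTheorem9 (k : fieldType) (hk : [pchar k] =i pred0)
  (n : nat) (hn : (3 <= n)%N) (m : k)
  (hm : ~ (exists z : int, in_Sn n z /\ m = z%:~R))
  (d : nat) (rho : bfun n -> 'M[k]_d)
  (hrep : is_brauer_rep m rho) (hirr : irreducible_brauer_rep rho) :
  (forall a : k, eigenvalue (rho_t12 rho) a -> a = 1 \/ a = -1)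
  \/
  (~ factors_through_Sn rho /\
   forall a : k, eigenvalue (rho_t12 rho) a <-> (a = -1 \/ a = 1 \/ a = 1 - m)).
Proof.
move: hn hm rho hrep hirr; case: n => [|[|[|n]]] // hn hm rho [hid hmul] _.
have mul : forall D1 D2, is_brauer D1 -> is_brauer D2 ->
    rho D1 * rho D2 = m ^+ bloops D1 D2 *: rho (bcomp D1 D2) := hmul.
have m1 : m != 1.
  apply/eqP => e; apply: hm; exists 1; split; first exact: S1.
  by rewrite e mulr1z.
have m2 : m != -2.
  apply/eqP => e; apply: hm; exists (-2); split; first exact: S2.
  by rewrite e (_ : (-2 : int) = - (2%:Z)) // mulrNz.
have SS : rho (mkD n gs) * rho (mkD n gs) = 1.
  by rewrite mul ?br_gs // l_ss c_ss expr0 scale1r -bidE hid.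
have SP : rho (mkD n gs) * rho (mkD n gp) = rho (mkD n gp).
  by rewrite mul ?br_gs ?br_gp // l_sp c_sp expr0 scale1r.
have PS : rho (mkD n gp) * rho (mkD n gs) = rho (mkD n gp).
  by rewrite mul ?br_gs ?br_gp // l_ps c_ps expr0 scale1r.
have PP : rho (mkD n gp) * rho (mkD n gp) = m *: rho (mkD n gp).
  by rewrite mul ?br_gp // l_pp c_pp expr1.
have QQ : rho (mkD n gq) * rho (mkD n gq) = m *: rho (mkD n gq).
  by rewrite mul ?br_gq // l_qq c_qq expr1.
have QS : rho (mkD n gq) * rho (mkD n gs) = rho (mkD n gA).
  by rewrite mul ?br_gq ?br_gs // l_qs c_qs expr0 scale1r.
have AQ : rho (mkD n gA) * rho (mkD n gq) = rho (mkD n gq).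
  by rewrite mul ?br_gq ?br_gA // l_Aq c_Aq expr0 scale1r.
have QP : rho (mkD n gq) * rho (mkD n gp) = rho (mkD n gC).
  by rewrite mul ?br_gq ?br_gp // l_qp c_qp expr0 scale1r.
have CQ : rho (mkD n gC) * rho (mkD n gq) = rho (mkD n gq).
  by rewrite mul ?br_gq ?br_gC // l_Cq c_Cq expr0 scale1r.
have PQ : rho (mkD n gp) * rho (mkD n gq) = rho (mkD n gB).
  by rewrite mul ?br_gq ?br_gp // l_pq c_pq expr0 scale1r.
have BP : rho (mkD n gB) * rho (mkD n gp) = rho (mkD n gp).
  by rewrite mul ?br_gB ?br_gp // l_Bp c_Bp expr0 scale1r.
have tE : rho_t12 rho = rho (mkD n gs) - rho (mkD n gp) by rewrite /rho_t12 s12E p12E.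
rewrite tE.
have [P0 | P0] := eqVneq (rho (mkD n gp)) 0.
  by left; rewrite P0 subr0 => a; apply: sq_eig.
have K := @key _ _ _ _ _ _ _ _ _ m1 m2 SS SP PS PP QQ QS AQ QP CQ PQ BP P0.
case: (boolP ((m == 0) || (m == 2%:R))) => hm02.
  left => a /K [-> | [-> | ->]]; [by right | by left |].
  by case/orP: hm02 => /eqP ->; [left; rewrite subr0 | right; ring].
right; split => //.
move=> hf; move: P0; rewrite -p12E hf ?eqxx //; first by rewrite p12E br_gp.
by apply/existsP; exists ord0; rewrite p12E ffunE.
Qed.
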